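(* For every Hermitian $a\in M_n$ we have $\tau(e^{a}\triangle a)\ge 0$, with equality if and only if $a\in\mathbb{C}1$.
   Context: Let $n\ge 2$, let $m\in\{1,\dots,n-1\}$ be relatively prime to $n$, and set $q=e^{2\pi i m/n}$. Let $M_n$ be the algebra of complex $n\times n$ matrices, with $1$ the identity matrix and $a^*$ the conjugate transpose. Let $u=\mathrm{diag}(1,q,\dots,q^{n-1})$ and let $v$ be the cyclic shift matrix with $v_{j,j+1}=1$ for $j=1,\dots,n-1$, $v_{n,1}=1$, other entries $0$. Let $x,y$ be any Hermitian matrices with $u=e^{\frac{2\pi i}{n}x}$ and $v=e^{\frac{2\pi i}{n}y}$. Define $\delta_1(a)=[y,a]$, $\delta_2(a)=-[x,a]$ and $\triangle=\delta_1^2+\delta_2^2$ on $M_n$. $\tau$ is the usual trace, and $e^a$ is the matrix exponential. *)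

(* Defs.v *)
(* complex numbers built on Stdlib Reals (needed for exp, PI,
   limits); complex n x n matrices represented as functions nat -> nat -> Cplx,
   only the entries with indices < n being relevant (indices 0..n-1). *)
From Stdlib Require Import Reals Arith.
Open Scope R_scope.

Record Cplx := mkC { re : R ; im : R }.

Definition C0 : Cplx := mkC 0 0.
Definition C1 : Cplx := mkC 1 0.
Definition Cadd (z w : Cplx) : Cplx := mkC (re z + re w) (im z + im w).
Definition Copp (z : Cplx) : Cplx := mkC (- re z) (- im z).
Definition Cmul (z w : Cplx) : Cplx :=
  mkC (re z * re w - im z * im w) (re z * im w + im z * re w).
Definition Cconj (z : Cplx) : Cplx := mkC (re z) (- im z).
Definition Cexp (z : Cplx) : Cplx := mkC (exp (re z) * cos (im z)) (exp (re z) * sin (im z)).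
Fixpoint Cpow (z : Cplx) (k : nat) : Cplx :=
  match k with O => C1 | S k' => Cmul z (Cpow z k') end.

Fixpoint csum (n : nat) (f : nat -> Cplx) : Cplx :=
  match n with O => C0 | S n' => Cadd (csum n' f) (f n') end.

Definition Mat := nat -> nat -> Cplx.

Definition mid : Mat := fun i j => if Nat.eqb i j then C1 else C0.
Definition mzero : Mat := fun _ _ => C0.
Definition madd (A B : Mat) : Mat := fun i j => Cadd (A i j) (B i j).
Definition mopp (A : Mat) : Mat := fun i j => Copp (A i j).
Definition msub (A B : Mat) : Mat := madd A (mopp B).
Definition mscal (c : Cplx) (A : Mat) : Mat := fun i j => Cmul c (A i j).
Definition mmul (n : nat) (A B : Mat) : Mat :=
  fun i j => csum n (fun k => Cmul (A i k) (B k j)).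
Definition madj (A : Mat) : Mat := fun i j => Cconj (A j i).

Definition meq (n : nat) (A B : Mat) : Prop :=
  forall i j, (i < n)%nat -> (j < n)%nat -> A i j = B i j.

Definition hermitian (n : nat) (A : Mat) : Prop := meq n A (madj A).

Definition trace (n : nat) (A : Mat) : Cplx := csum n (fun i => A i i).

Fixpoint mpow (n : nat) (A : Mat) (k : nat) : Mat :=
  match k with O => mid | S k' => mmul n A (mpow n A k') end.

Fixpoint mexp_partial (n : nat) (A : Mat) (N : nat) : Mat :=
  match N with
  | O => mid
  | S N' => madd (mexp_partial n A N')
                 (mscal (mkC (/ INR (fact N)) 0) (mpow n A N))
  end.

Definition is_mexp (n : nat) (A E : Mat) : Prop :=
  forall i j, (i < n)%nat -> (j < n)%nat ->
    Un_cv (fun N => re (mexp_partial n A N i j)) (re (E i j)) /\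
    Un_cv (fun N => im (mexp_partial n A N i j)) (im (E i j)).

Definition qroot (n m : nat) : Cplx := Cexp (mkC 0 (2 * PI * INR m / INR n)).

Definition umat (n m : nat) : Mat :=
  fun i j => if Nat.eqb i j then Cpow (qroot n m) i else C0.

(* cyclic shift: v_{j,j+1} = 1, v_{n-1,0} = 1 (0-based indices) *)
Definition vmat (n : nat) : Mat :=
  fun i j => if Nat.eqb j (Nat.modulo (S i) n) then C1 else C0.

Definition twopi_i_over (n : nat) : Cplx := mkC 0 (2 * PI / INR n).

Definition comm (n : nat) (A B : Mat) : Mat := msub (mmul n A B) (mmul n B A).

Definition delta1 (n : nat) (y a : Mat) : Mat := comm n y a.
Definition delta2 (n : nat) (x a : Mat) : Mat := mopp (comm n x a).
Definition laplacian (n : nat) (x y a : Mat) : Mat :=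
  madd (delta1 n y (delta1 n y a)) (delta2 n x (delta2 n x a)).

(* Main.v *)
Require Import Defs.
From Stdlib Require Import Reals Arith.
Open Scope R_scope.

From Stdlib Require Import Lra Lia ZArith.


Lemma Cpow_qroot (n m k : nat) :
  Cpow (qroot n m) k =
  mkC (cos (INR k * (2 * PI * INR m / INR n))) (sin (INR k * (2 * PI * INR m / INR n))).
Proof.
  set (th := 2 * PI * INR m / INR n).
  induction k as [|k IH].
  - simpl. rewrite Rmult_0_l, cos_0, sin_0. reflexivity.
  - change (Cpow (qroot n m) (S k)) with (Cmul (qroot n m) (Cpow (qroot n m) k)).
    rewrite IH. unfold qroot, Cexp, Cmul. cbn [re im]. rewrite exp_0, !Rmult_1_l.
    fold th. rewrite S_INR.
    replace ((INR k + 1) * th) with (th + INR k * th) by ring.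
    rewrite cos_plus, sin_plus. f_equal; ring.
Qed.

Lemma q_inj (n m i j : nat) : (2 <= n)%nat -> Nat.gcd m n = 1%nat ->
  (i < j)%nat -> (j < n)%nat -> Cpow (qroot n m) i = Cpow (qroot n m) j -> False.
Proof.
  intros Hn Hg Hij Hj E.
  rewrite !Cpow_qroot in E. injection E as Ec Es.
  set (th := 2 * PI * INR m / INR n) in *.
  assert (Hn0 : 0 < INR n) by (apply lt_0_INR; lia).
  set (s := INR (j - i) * PI * INR m / INR n).
  assert (H2s : 2 * s = INR j * th - INR i * th).
  { unfold s, th. rewrite minus_INR by lia. field. lra. }
  assert (Hc : cos (2 * s) = 1).
  { rewrite H2s, cos_minus, <- Ec, <- Es.
    pose proof (sin2_cos2 (INR i * th)) as HH. unfold Rsqr in HH. lra. }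
  rewrite cos_2a_sin in Hc.
  assert (Hs : sin s = 0) by nra.
  destruct (sin_eq_0_0 s Hs) as [k Hk].
  unfold s in Hk.
  assert (Hk2 : INR (j - i) * INR m = IZR k * INR n).
  { apply Rmult_eq_reg_r with (PI / INR n).
    - replace (INR (j - i) * INR m * (PI / INR n)) with (INR (j - i) * PI * INR m / INR n) by (field; lra).
      rewrite Hk. field. lra.
    - pose proof PI_RGT_0. apply Rgt_not_eq. unfold Rdiv. apply Rmult_gt_0_compat; [lra|].
      apply Rinv_0_lt_compat; lra. }
  rewrite <- mult_INR, INR_IZR_INZ, INR_IZR_INZ, <- mult_IZR in Hk2.
  apply eq_IZR in Hk2.
  assert (Hk0 : (0 <= k)%Z) by nia.
  assert (Hdiv : Nat.divide n (m * (j - i))).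
  { exists (Z.to_nat k). lia. }
  apply Nat.gauss in Hdiv.
  - destruct Hdiv as [t Ht]. destruct t; lia.
  - rewrite Nat.gcd_comm. exact Hg.
Qed.

Lemma exp_mono_prod (x y : R) : 0 <= (exp x - exp y) * (x - y).
Proof.
  destruct (Rtotal_order x y) as [h|[h|h]].
  - pose proof (exp_increasing _ _ h). nra.
  - subst. nra.
  - pose proof (exp_increasing _ _ h). nra.
Qed.

Lemma g_eq0 (a b x y : R) : (a * a + b * b) * (exp x - exp y) * (x - y) = 0 ->
  (a = 0 /\ b = 0) \/ x = y.
Proof.
  intros h. destruct (Req_dec x y) as [e|ne]; [now right|left].
  assert (hp : 0 < (exp x - exp y) * (x - y)).
  { destruct (Rtotal_order x y) as [h1|[h1|h1]].
    - pose proof (exp_increasing _ _ h1). nra.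
    - contradiction.
    - pose proof (exp_increasing _ _ h1). nra. }
  assert (hw : a * a + b * b = 0).
  { rewrite Rmult_assoc in h. apply Rmult_integral in h. destruct h as [h|h]; [exact h|lra]. }
  split; nra.
Qed.


Module Aux.
From HB Require Import structures.
From mathcomp Require Import all_boot all_order all_algebra.
From mathcomp Require Import Rstruct complex ring.
Import GRing.Theory Num.Theory Order.TTheory.
Local Open Scope ring_scope.


Notation K := (complex R).
Definition toC (z : Cplx) : K := Complex (re z) (im z).
Definition toM (n : nat) (A : Mat) : 'M[K]_n := \matrix_(i, j) toC (A i j).

Lemma toC_inj z w : toC z = toC w -> z = w.
Proof. by case: z w => [a b] [c d] [/= -> ->]. Qed.
Lemma toC_add z w : toC (Cadd z w) = toC z + toC w.
Proof. by []. Qed.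
Lemma toC_mul z w : toC (Cmul z w) = toC z * toC w.
Proof. by []. Qed.
Lemma toC_opp z : toC (Copp z) = - toC z.
Proof. by []. Qed.
Lemma toC_conj z : toC (Cconj z) = Num.conj (toC z).
Proof. by []. Qed.
Lemma toC0 : toC Defs.C0 = 0. Proof. by []. Qed.
Lemma toC1 : toC Defs.C1 = 1. Proof. by []. Qed.
Definition rC (x : R) : K := Complex x 0.
Lemma toC_real x : toC (mkC x 0) = rC x. Proof. by []. Qed.

Lemma toC_csum n f : toC (csum n f) = \sum_(i < n) toC (f i).
Proof.
elim: n => [|n IH] /=; first by rewrite big_ord0.
by rewrite toC_add IH big_ord_recr.
Qed.

Lemma natEqbE (a b : nat) : Nat.eqb a b = (a == b).
Proof. by case: (Nat.eqb_spec a b) => [->|/eqP/negbTE ->]; rewrite ?eqxx. Qed.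

Lemma toME n A (i j : 'I_n) : toM n A i j = toC (A i j).
Proof. by rewrite mxE. Qed.

Lemma toM_mul n A B : toM n (mmul n A B) = toM n A *m toM n B.
Proof.
apply/matrixP => i j; rewrite !mxE /mmul toC_csum.
by apply: eq_bigr => k _; rewrite toC_mul !mxE.
Qed.

Lemma toM_add n A B : toM n (madd A B) = toM n A + toM n B.
Proof. by apply/matrixP => i j; rewrite !mxE toC_add. Qed.

Lemma toM_opp n A : toM n (mopp A) = - toM n A.
Proof. by apply/matrixP => i j; rewrite !mxE toC_opp. Qed.

Lemma toM_scal n c A : toM n (mscal c A) = toC c *: toM n A.
Proof. by apply/matrixP => i j; rewrite !mxE toC_mul. Qed.

Lemma toM_mid n : toM n mid = 1%:M.
Proof.
apply/matrixP => i j; rewrite !mxE /mid natEqbE.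
have -> : (nat_of_ord i == nat_of_ord j) = (i == j) by [].
by case: (i == j).
Qed.

Lemma toM_adj n A : toM n (madj A) = map_mx Num.conj (trmx (toM n A)).
Proof. by apply/matrixP => i j; rewrite !mxE toC_conj. Qed.

Lemma toM_meq n A B : meq n A B <-> toM n A = toM n B.
Proof.
split.
- move=> h; apply/matrixP => i j; rewrite !mxE h //; apply/ssrnat.ltP; exact: ltn_ord.
- move=> /matrixP h i j hi hj.
  have hi' : (i < n)%N by apply/ssrnat.ltP.
  have hj' : (j < n)%N by apply/ssrnat.ltP.
  have := h (Ordinal hi') (Ordinal hj'); rewrite !mxE /=.
  exact: toC_inj.
Qed.

Lemma toC_trace n A : toC (trace n A) = \tr (toM n A).
Proof.
by rewrite /trace toC_csum /mxtrace; apply: eq_bigr => i _; rewrite mxE.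
Qed.

Lemma toM_pow n A k : toM n.+1 (mpow n.+1 A k) = toM n.+1 A ^+ k.
Proof.
elim: k => [|k IH] /=; first by rewrite toM_mid expr0.
by rewrite toM_mul IH exprS mulmxE.
Qed.

Lemma toM_exp_partial n A N :
  toM n.+1 (mexp_partial n.+1 A N) =
  \sum_(k < N.+1) rC (Rinv (INR (fact k))) *: toM n.+1 A ^+ k.
Proof.
elim: N => [|N IH].
  rewrite /= big_ord1 toM_mid expr0 /= Rinv_1.
  by rewrite scale1r.
change (mexp_partial n.+1 A N.+1) with (madd (mexp_partial n.+1 A N) (mscal (mkC (/ INR (fact N.+1)) 0) (mpow n.+1 A N.+1))).
rewrite toM_add IH toM_scal toM_pow toC_real [in RHS]big_ord_recr /=.
by [].
Qed.


Lemma Ucv_ext (s t : nat -> R) l : Un_cv s l -> (forall N, s N = t N) -> Un_cv t l.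
Proof.
move=> h e eps he; have [N hN] := h eps he; exists N => k hk.
by rewrite -e; apply: hN.
Qed.

Arguments Ucv_ext {s t l}.

Lemma Ucv_const (c : R) : Un_cv (fun _ => c) c.
Proof.
move=> eps he; exists 0%N => k _; rewrite /R_dist Rminus_eq_0 Rabs_R0.
exact: he.
Qed.

Notation cRe := (@complex.Re R).
Notation cIm := (@complex.Im R).

Definition ccv (s : nat -> K) (L : K) :=
  Un_cv (fun N => cRe (s N)) (cRe L) /\ Un_cv (fun N => cIm (s N)) (cIm L).

Lemma ReD (x y : K) : cRe (x + y) = cRe x + cRe y. Proof. by case: x y => [? ?] [? ?]. Qed.
Lemma ImD (x y : K) : cIm (x + y) = cIm x + cIm y. Proof. by case: x y => [? ?] [? ?]. Qed.
Lemma ReM (x y : K) : cRe (x * y) = cRe x * cRe y - cIm x * cIm y.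
Proof. by case: x y => [? ?] [? ?]. Qed.
Lemma ImM (x y : K) : cIm (x * y) = cRe x * cIm y + cIm x * cRe y.
Proof. by case: x y => [? ?] [? ?]. Qed.
Lemma Re0 : cRe (0 : K) = 0. Proof. by []. Qed.
Lemma Im0 : cIm (0 : K) = 0. Proof. by []. Qed.

Lemma ccv_ext s t L : ccv s L -> (forall N, s N = t N) -> ccv t L.
Proof.
move=> [h1 h2] e; split; [apply: (Ucv_ext h1) | apply: (Ucv_ext h2)];
by move=> N; rewrite e.
Qed.

Arguments ccv_ext {s t L}.

Lemma ccv_unique s L1 L2 : ccv s L1 -> ccv s L2 -> L1 = L2.
Proof.
case: L1 L2 => [a b] [c d] [h1 h2] [h3 h4].
have e1 := UL_sequence _ _ _ h1 h3; have e2 := UL_sequence _ _ _ h2 h4.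
by simpl in e1, e2; rewrite e1 e2.
Qed.

Lemma ccv_const c : ccv (fun _ => c) c.
Proof. by split; apply: Ucv_const. Qed.

Lemma ccv_add s t L M : ccv s L -> ccv t M -> ccv (fun N => s N + t N) (L + M).
Proof.
move=> [h1 h2] [h3 h4]; split.
- rewrite ReD; apply: (Ucv_ext (CV_plus _ _ _ _ h1 h3)) => N; by rewrite ReD.
- rewrite ImD; apply: (Ucv_ext (CV_plus _ _ _ _ h2 h4)) => N; by rewrite ImD.
Qed.

Arguments ccv_add {s t L M}.

Lemma ccv_mul s t L M : ccv s L -> ccv t M -> ccv (fun N => s N * t N) (L * M).
Proof.
move=> [h1 h2] [h3 h4]; split.
- rewrite ReM; apply: (Ucv_ext (CV_minus _ _ _ _ (CV_mult _ _ _ _ h1 h3) (CV_mult _ _ _ _ h2 h4))) => N.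
  by rewrite ReM.
- rewrite ImM; apply: (Ucv_ext (CV_plus _ _ _ _ (CV_mult _ _ _ _ h1 h4) (CV_mult _ _ _ _ h2 h3))) => N.
  by rewrite ImM.
Qed.

Arguments ccv_mul {s t L M}.

Lemma ccv_sum (I : Type) (r : seq I) (s : I -> nat -> K) (L : I -> K) :
  (forall k, ccv (s k) (L k)) ->
  ccv (fun N => \sum_(k <- r) s k N) (\sum_(k <- r) L k).
Proof.
move=> h; elim: r => [|a r IH].
  by rewrite big_nil; apply: (ccv_ext (ccv_const 0)) => N; rewrite big_nil.
rewrite big_cons; apply: (ccv_ext (ccv_add (h a) IH)) => N.
by rewrite big_cons.
Qed.

Lemma ccv_real (s : nat -> R) l : Un_cv s l -> ccv (fun N => rC (s N)) (rC l).
Proof. by move=> h; split => //=; apply: Ucv_const. Qed.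

Lemma exp_cv (r : R) :
  Un_cv (fun N => sum_f_R0 (fun k => Rmult (Rinv (INR (fact k))) (pow r k)) N) (exp r).
Proof. rewrite /exp; case: (exist_exp r) => l h /= eps he. exact: (h eps he). Qed.

Lemma rCD x y : rC (x + y) = rC x + rC y.
Proof. by apply/eqP; rewrite eq_complex /= addr0 !eqxx. Qed.
Lemma rCM x y : rC (x * y) = rC x * rC y.
Proof. by apply/eqP; rewrite eq_complex /= !mulr0 !mul0r subr0 addr0 !eqxx. Qed.
Lemma rCX x k : rC (x ^+ k) = rC x ^+ k.
Proof. elim: k => [|k IH]; first by []. by rewrite !exprS rCM IH. Qed.
Lemma rC0 : rC 0 = 0. Proof. by []. Qed.
Lemma rC1 : rC 1 = 1. Proof. by []. Qed.

Lemma partial_exp_rC (r : R) N :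
  \sum_(k < N.+1) rC (Rinv (INR (fact k))) * rC r ^+ k =
  rC (sum_f_R0 (fun k => Rmult (Rinv (INR (fact k))) (pow r k)) N).
Proof.
elim: N => [|N IH]; first by rewrite big_ord1 expr0 mulr1 /= Rmult_1_r.
rewrite big_ord_recr IH /=.
rewrite rCD rCM. change (Rmult r (pow r N)) with (pow r N.+1). by rewrite RpowE rCX.
Qed.

Arguments ccv_sum {I} r {s L}.
Arguments ccv_real {s l}.
Arguments ccv_unique {s L1 L2}.


Notation adj M := (map_mx Num.conj (trmx M)).

Lemma adj_mul (m n p : nat) (M : 'M[K]_(m, n)) (N : 'M[K]_(n, p)) :
  adj (M *m N) = adj N *m adj M.
Proof. by rewrite trmx_mul map_mxM. Qed.

Lemma adjK (m n : nat) (M : 'M[K]_(m, n)) : adj (adj M) = M.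
Proof. exact: trmxCK. Qed.

Lemma spectral_herm (N : nat) (A : 'M[K]_N) : adj A = A ->
  exists (P : 'M[K]_N) (r : 'I_N -> R),
    P *m adj P = 1%:M /\ adj P *m P = 1%:M /\
    A = adj P *m diag_mx (\row_i rC (r i)) *m P.
Proof.
move=> hA.
have Ah : A \is hermsymmx.
  by apply/is_hermitianmxP; rewrite expr0 scale1r hA.
have /orthomx_spectralP eA := hermitian_normalmx Ah.
have Pu := spectral_unitarymx A.
have hr := hermitian_spectral_diag_real Ah.
exists (spectralmx A), (fun i => complex.Re (spectral_diag A 0 i)).
have h1 : spectralmx A *m adj (spectralmx A) = 1%:M by apply/unitarymxP.
split => //; split; first exact: mulmx1C.
rewrite [LHS]eA invmx_unitary //; congr (_ *m diag_mx _ *m _).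
apply/rowP => i; rewrite mxE.
move/mxOverP: hr => /(_ 0 i).
by case: (spectral_diag A 0 i) => a b; rewrite complex_real => /eqP ->.
Qed.

Definition Lap (N : nat) (X A : 'M[K]_N) :=
  X *m (X *m A - A *m X) - (X *m A - A *m X) *m X.
Arguments Lap {N}.

Lemma tr_diag_lap (N : nat) (f d : 'I_N -> K) (B : 'M[K]_N) :
  \tr (diag_mx (\row_i f i) *m Lap B (diag_mx (\row_i d i))) =
  \sum_i \sum_j (B i j * B j i) * (f i - f j) * (d i - d j).
Proof.
set C := B *m diag_mx (\row_i d i) - diag_mx (\row_i d i) *m B.
have eC : forall i j, C i j = B i j * (d j - d i).
  move=> i j; rewrite /C mul_mx_diag mul_diag_mx !mxE; ring.
set S1 := \sum_i \sum_j (B i j * B j i * f i * (d i - d j)).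
have L1 : \tr (diag_mx (\row_i f i) *m Lap B (diag_mx (\row_i d i))) = S1 *+ 2.
  rewrite /Lap -/C mul_diag_mx /mxtrace /S1 -sumrMnl; apply: eq_bigr => i _.
  rewrite !mxE -sumrB mulr_sumr -sumrMnl; apply: eq_bigr => j _.
  by rewrite !eC; ring.
have S2 : \sum_i \sum_j (B i j * B j i * f j * (d i - d j)) = - S1.
  rewrite exchange_big /= /S1 -sumrN; apply: eq_bigr => i _.
  by rewrite -sumrN; apply: eq_bigr => j _; ring.
rewrite L1.
have -> : \sum_i \sum_j (B i j * B j i) * (f i - f j) * (d i - d j) =
  S1 - \sum_i \sum_j (B i j * B j i * f j * (d i - d j)).
  rewrite /S1 -sumrB; apply: eq_bigr => i _; rewrite -sumrB; apply: eq_bigr => j _; ring.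
by rewrite S2 opprK mulr2n.
Qed.

Lemma termR (z : K) (e1 e2 r1 r2 : R) :
  z * Num.conj z * (rC e1 - rC e2) * (rC r1 - rC r2) =
  rC ((complex.Re z * complex.Re z + complex.Im z * complex.Im z) * (e1 - e2) * (r1 - r2)).
Proof.
case: z => a b; apply/eqP; rewrite eq_complex /= ?RmultE ?RplusE ?RminusE ?RoppE; apply/andP; split; apply/eqP; ring.
Qed.

Lemma rC_sum (I : Type) (s : seq I) (F : I -> R) :
  rC (\sum_(i <- s) F i) = \sum_(i <- s) rC (F i).
Proof. exact: (big_morph rC rCD rC0). Qed.

Lemma g_ge0' (a b x y : R) : 0 <= (a * a + b * b) * (exp x - exp y) * (x - y).
Proof.
rewrite -mulrA; apply: mulr_ge0; first by rewrite -!expr2 addr_ge0 ?sqr_ge0.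
apply/RleP; exact: exp_mono_prod.
Qed.

Section Key.
Variables (N : nat) (P : 'M[K]_N).
Hypotheses (hP1 : P *m adj P = 1%:M) (hP2 : adj P *m P = 1%:M).

Definition psi (M : 'M[K]_N) : 'M[K]_N := adj P *m M *m P.

Lemma psiM M M' : psi M *m psi M' = psi (M *m M').
Proof.
by rewrite /psi !mulmxA -[adj P *m M *m P *m adj P]mulmxA hP1 mulmx1.
Qed.

Lemma psiB M M' : psi (M - M') = psi M - psi M'.
Proof. by rewrite /psi mulmxBr mulmxBl. Qed.

Lemma Lap_psi M M' : Lap (psi M) (psi M') = psi (Lap M M').
Proof. by rewrite /Lap !psiM -!psiB !psiM -psiB. Qed.

Lemma tr_psi M : \tr (psi M) = \tr M.
Proof. by rewrite /psi mxtrace_mulC mulmxA hP1 mul1mx. Qed.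

Lemma psi_inv X : psi (P *m X *m adj P) = X.
Proof. by rewrite /psi !mulmxA hP2 mul1mx -mulmxA hP2 mulmx1. Qed.

Lemma key (r : 'I_N -> R) (X : 'M[K]_N) : adj X = X ->
  exists S : R,
   \tr (psi (diag_mx (\row_i rC (exp (r i)))) *m Lap X (psi (diag_mx (\row_i rC (r i))))) = rC S
   /\ 0 <= S /\ (S = 0 -> X *m psi (diag_mx (\row_i rC (r i))) = psi (diag_mx (\row_i rC (r i))) *m X).
Proof.
move=> hX.
set B := P *m X *m adj P.
have eX : X = psi B by rewrite psi_inv.
have hB : adj B = B by rewrite /B !adj_mul adjK hX mulmxA.
have hBji : forall i j, B j i = Num.conj (B i j).
  move=> i j; have /matrixP/(_ j i) := hB; rewrite !mxE => <-.
  by [].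
clearbody B.
pose g i j := (complex.Re (B i j) * complex.Re (B i j) + complex.Im (B i j) * complex.Im (B i j))
              * (exp (r i) - exp (r j)) * (r i - r j).
exists (\sum_i \sum_j g i j).
have eT : \tr (psi (diag_mx (\row_i rC (exp (r i)))) *m Lap X (psi (diag_mx (\row_i rC (r i))))) =
   rC (\sum_i \sum_j g i j).
  rewrite eX Lap_psi psiM tr_psi tr_diag_lap rC_sum; apply: eq_bigr => i _.
  rewrite rC_sum; apply: eq_bigr => j _.
  by rewrite (hBji i j) termR.
split => //; split.
  by apply: sumr_ge0 => i _; apply: sumr_ge0 => j _; apply: g_ge0'.
move=> S0.
have g0 : forall i j, g i j = 0.
  move=> i j.
  have /psumr_eq0P := S0 => /(_ (fun i _ => sumr_ge0 _ (fun j _ => g_ge0' _ _ _ _))) /(_ i isT).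
  move/psumr_eq0P => /(_ (fun j _ => g_ge0' _ _ _ _)) /(_ j isT).
  by [].
have comm : B *m diag_mx (\row_i rC (r i)) = diag_mx (\row_i rC (r i)) *m B.
  apply/matrixP => i j; rewrite mul_mx_diag mul_diag_mx !mxE.
  have [[ha hb]|e] := g_eq0 _ _ _ _ (g0 i j).
    have -> : B i j = 0 by apply/eqP; rewrite eq_complex ha hb /= !eqxx.
    by rewrite mulr0 mul0r.
  by rewrite e mulrC.
by rewrite eX !psiM comm.
Qed.

End Key.
Arguments psi {N}.


Lemma ord_lt (n : nat) (i : 'I_n) : (nat_of_ord i < n)%coq_nat.
Proof. by apply/ssrnat.ltP; exact: ltn_ord. Qed.
Arguments ord_lt {n}.

Lemma is_mexp_ccv n A E : is_mexp n A E ->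
  forall i j : 'I_n, ccv (fun N => toM n (mexp_partial n A N) i j) (toM n E i j).
Proof.
move=> h i j; have [h1 h2] := h i j (ord_lt i) (ord_lt j).
split; rewrite mxE; [eapply (Ucv_ext h1) | eapply (Ucv_ext h2)] => N; by rewrite !mxE.
Qed.

Arguments is_mexp_ccv {n A E}.

Lemma comm_limit N (S : nat -> 'M[K]_N) (U A : 'M[K]_N) :
  (forall i j, ccv (fun k => S k i j) (U i j)) ->
  (forall k, S k *m A = A *m S k) -> U *m A = A *m U.
Proof.
move=> hS hc; apply/matrixP => i j; rewrite !mxE.
have c1 : ccv (fun k => (S k *m A) i j) (\sum_l U i l * A l j).
  apply: (ccv_ext (ccv_sum _ (fun l => ccv_mul (hS i l) (ccv_const (A l j))))).
  by move=> k; rewrite mxE.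
have c2 : ccv (fun k => (S k *m A) i j) (\sum_l A i l * U l j).
  apply: (ccv_ext (ccv_sum _ (fun l => ccv_mul (ccv_const (A i l)) (hS l j)))).
  by move=> k; rewrite hc mxE.
exact: ccv_unique c1 c2.
Qed.

Lemma comm_partial n (M A : Mat) :
  toM n.+1 M *m toM n.+1 A = toM n.+1 A *m toM n.+1 M ->
  forall N, toM n.+1 (mexp_partial n.+1 M N) *m toM n.+1 A =
            toM n.+1 A *m toM n.+1 (mexp_partial n.+1 M N).
Proof.
rewrite !mulmxE => h N; rewrite toM_exp_partial.
apply/esym; apply: commr_sum => k _.
rewrite /GRing.comm -scalerAl -scalerAr; congr (_ *: _).
by apply: commrX; rewrite /GRing.comm h.
Qed.

Section Exp.
Variables (n : nat) (P : 'M[K]_n.+1).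
Hypotheses (hP1 : P *m adj P = 1%:M) (hP2 : adj P *m P = 1%:M).

Lemma psi_entry (v : 'I_n.+1 -> K) i j :
  psi P (diag_mx (\row_l v l)) i j = \sum_l adj P i l * v l * P l j.
Proof.
rewrite /psi mxE; apply: eq_bigr => l _; by rewrite mul_mx_diag !mxE.
Qed.

Lemma psi_pow (v : 'I_n.+1 -> K) k :
  psi P (diag_mx (\row_l v l)) ^+ k = psi P (diag_mx (\row_l v l ^+ k)).
Proof.
elim: k => [|k IH].
  rewrite expr0 /psi.
  have -> : diag_mx (\row_l v l ^+ 0) = 1%:M :> 'M[K]_n.+1.
    by apply/matrixP => i j; rewrite !mxE expr0.
  by rewrite mulmx1 hP2.
rewrite exprS IH -mulmxE psiM // mulmx_diag; congr (psi _ (diag_mx _)).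
by apply/rowP => l; rewrite !mxE exprS.
Qed.

Lemma exp_ident (a Ea : Mat) (r : 'I_n.+1 -> R) :
  toM n.+1 a = psi P (diag_mx (\row_l rC (r l))) -> is_mexp n.+1 a Ea ->
  toM n.+1 Ea = psi P (diag_mx (\row_l rC (exp (r l)))).
Proof.
move=> ha hE; apply/matrixP => i j.
apply: (ccv_unique (is_mexp_ccv hE i j)).
rewrite psi_entry.
apply: (ccv_ext (ccv_sum _ (fun l => ccv_mul (ccv_mul (ccv_const (adj P i l)) (ccv_real (exp_cv (r l)))) (ccv_const (P l j))))).
move=> N /=.
rewrite toM_exp_partial ha summxE.
have pp : forall k, psi P (diag_mx (\row_l rC (r l))) ^+ k = psi P (diag_mx (\row_l rC (r l) ^+ k)) by move=> k; exact: (psi_pow (fun l => rC (r l))).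
under [in RHS]eq_bigr => k _ do rewrite pp mxE (psi_entry (fun l => rC (r l) ^+ k)).
under [in RHS]eq_bigr => k _ do rewrite mulr_sumr.
rewrite [RHS]exchange_big /=; apply: eq_bigr => l _.
rewrite -partial_exp_rC mulr_sumr mulr_suml; apply: eq_bigr => k _.
ring.
Qed.

End Exp.


Lemma toM_comm n P Q : toM n (Defs.comm n P Q) = toM n P *m toM n Q - toM n Q *m toM n P.
Proof. by rewrite /Defs.comm /msub toM_add toM_opp !toM_mul. Qed.

Lemma toM_lap n x y a :
  toM n (laplacian n x y a) = Lap (toM n y) (toM n a) + Lap (toM n x) (toM n a).
Proof.
rewrite /laplacian /delta1 /delta2 toM_add !toM_opp !toM_comm !toM_opp !toM_comm /Lap.
by rewrite mulmxN mulNmx opprK opprD opprK addrC.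
Qed.

Lemma toM_herm n A : Defs.hermitian n A -> adj (toM n A) = toM n A.
Proof. by move=> /toM_meq h; rewrite -toM_adj -h. Qed.

Lemma diag_mulE N (M A : 'M[K]_N) :
  (forall i j, i != j -> A i j = 0) ->
  (forall i j, (M *m A) i j = M i j * A j j) /\ (forall i j, (A *m M) i j = A i i * M i j).
Proof.
move=> hA; split => i j; rewrite mxE.
  rewrite (bigD1 j) //= big1 ?addr0 // => l /negbTE hl.
  by rewrite hA ?mulr0 // hl.
rewrite (bigD1 i) //= big1 ?addr0 // => l hl.
by rewrite hA ?mul0r // eq_sym.
Qed.

Lemma u_diag (N m : nat) (A : 'M[K]_N) : (2 <= N)%coq_nat -> Nat.gcd m N = 1%N ->
  toM N (umat N m) *m A = A *m toM N (umat N m) -> forall i j : 'I_N, i != j -> A i j = 0.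
Proof.
move=> hN hg h i j hij.
have eU : toM N (umat N m) = diag_mx (\row_i toC (Cpow (qroot N m) i)).
  apply/matrixP => k l; rewrite !mxE /umat natEqbE.
  have -> : (nat_of_ord k == nat_of_ord l) = (k == l) by [].
  by case: eqP => [->|_]; rewrite ?mulr1n ?mulr0n.
move: h; rewrite eU mul_diag_mx mul_mx_diag => /matrixP /(_ i j); rewrite !mxE.
move=> e.
have hne : toC (Cpow (qroot N m) i) != toC (Cpow (qroot N m) j).
  apply/negP => /eqP /toC_inj e2.
  have hi := ord_lt i; have hj := ord_lt j.
  have [lt|gt|eq] := ltngtP i j.
  - by apply: (q_inj N m i j hN hg (elimT ssrnat.ltP lt) hj e2).
  - by apply: (q_inj N m j i hN hg (elimT ssrnat.ltP gt) hi (esym e2)).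
  - by move/negP: hij; apply; apply/eqP/val_inj.
have : (toC (Cpow (qroot N m) i) - toC (Cpow (qroot N m) j)) * A i j = 0.
  by rewrite mulrBl e mulrC subrr.
by move/eqP; rewrite mulf_eq0 subr_eq0 (negbTE hne) /= => /eqP.
Qed.

Lemma v_const (n : nat) (A : 'M[K]_n.+1) :
  (forall i j, i != j -> A i j = 0) ->
  toM n.+1 (vmat n.+1) *m A = A *m toM n.+1 (vmat n.+1) ->
  forall i : 'I_n.+1, A i i = A ord0 ord0.
Proof.
move=> hA h.
have [h1 h2] := @diag_mulE n.+1 (toM n.+1 (vmat n.+1)) A hA.
suff: forall k (hk : (k < n.+1)%N), A (Ordinal hk) (Ordinal hk) = A ord0 ord0.
  by move=> H i; case: i => k hk; apply: H.
elim => [|k IH] hk; first by congr (A _ _); apply: val_inj.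
have hk' : (k < n.+1)%N by apply: ltnW.
rewrite -(IH hk').
move/matrixP: h => /(_ (Ordinal hk') (Ordinal hk)).
rewrite h1 h2 !mxE /vmat.
rewrite (_ : Nat.modulo _ n.+1 = k.+1); last by apply: Nat.mod_small; apply/ssrnat.ltP.
rewrite natEqbE /= eqxx toC1 mul1r mulr1 => ->. by [].
Qed.


Lemma comm_scal N (c : K) (X A : 'M[K]_N) : X *m A = A *m X -> (c *: X) *m A = A *m (c *: X).
Proof. by move=> h; rewrite -scalemxAl -scalemxAr h. Qed.

Theorem final : forall (n m : nat),
    Peano.le 2 n -> Peano.le 1 m -> Peano.le m (Nat.sub n 1) -> Nat.gcd m n = 1%N ->
  forall x y : Mat,
    Defs.hermitian n x -> Defs.hermitian n y ->
    Defs.is_mexp n (Defs.mscal (Defs.twopi_i_over n) x) (Defs.umat n m) ->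
    Defs.is_mexp n (Defs.mscal (Defs.twopi_i_over n) y) (Defs.vmat n) ->
  forall a Ea : Mat,
    Defs.hermitian n a -> Defs.is_mexp n a Ea ->
    Defs.im (Defs.trace n (Defs.mmul n Ea (Defs.laplacian n x y a))) = IZR Z0 /\
    Rle (IZR Z0) (Defs.re (Defs.trace n (Defs.mmul n Ea (Defs.laplacian n x y a)))) /\
    (Defs.trace n (Defs.mmul n Ea (Defs.laplacian n x y a)) = Defs.C0 <->
       exists c : Cplx, Defs.meq n a (Defs.mscal c Defs.mid)).
Proof.
move=> [|n] m h2 h1m hmn hg x y hx hy hU hV a Ea ha hE.
  by exfalso; lia.
have hA := @toM_herm _ _ ha.
have [P [r [hP1 [hP2 eA]]]] := @spectral_herm _ _ hA.
have eA' : toM n.+1 a = psi P (diag_mx (\row_i rC (r i))) by rewrite eA.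
have eE := @exp_ident _ P hP1 hP2 a Ea r eA' hE.
have [SX [eX [geX zX]]] := @key _ P hP1 hP2 r _ (@toM_herm _ _ hx).
have [SY [eY [geY zY]]] := @key _ P hP1 hP2 r _ (@toM_herm _ _ hy).
set T := Defs.trace _ _.
have eT : toC T = rC (SY + SX).
  rewrite /T toC_trace toM_mul toM_lap mulmxDr mxtraceD eE eA' eX eY.
  by rewrite rCD.
have reT : Defs.re T = SY + SX by exact: (congr1 (@complex.Re R) eT).
have imT : Defs.im T = 0 by exact: (congr1 (@complex.Im R) eT).
have geX' : Rle (IZR Z0) SX by apply/RleP.
have geY' : Rle (IZR Z0) SY by apply/RleP.
split; first exact: imT.
split.
  rewrite reT -RplusE; lra.
split.
- move=> T0.
  have S0 : Rplus SY SX = IZR Z0 by rewrite RplusE -reT T0.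
  have SY0 : SY = IZR Z0 by lra.
  have SX0 : SX = IZR Z0 by lra.
  have cX := zX SX0; have cY := zY SY0.
  rewrite -eA' in cX cY.
  have cU : toM n.+1 (umat n.+1 m) *m toM n.+1 a = toM n.+1 a *m toM n.+1 (umat n.+1 m).
    apply: (@comm_limit _ (fun k => toM n.+1 (mexp_partial n.+1 (mscal (twopi_i_over n.+1) x) k))).
      exact: is_mexp_ccv hU.
    apply: comm_partial; rewrite toM_scal; exact: comm_scal.
  have cV : toM n.+1 (vmat n.+1) *m toM n.+1 a = toM n.+1 a *m toM n.+1 (vmat n.+1).
    apply: (@comm_limit _ (fun k => toM n.+1 (mexp_partial n.+1 (mscal (twopi_i_over n.+1) y) k))).
      exact: is_mexp_ccv hV.
    apply: comm_partial; rewrite toM_scal; exact: comm_scal.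
  have off := @u_diag n.+1 m (toM n.+1 a) h2 hg cU.
  have dg := @v_const n (toM n.+1 a) off cV.
  exists (a 0%N 0%N).
  apply/toM_meq; rewrite toM_scal toM_mid; apply/matrixP => i j.
  case: (eqVneq i j) => [<-|ne].
    by rewrite dg !mxE eqxx mulr1.
  by rewrite off // !mxE (negbTE ne) mulr0.
- move=> [c hc].
  have eA0 : toM n.+1 a = toC c *: 1%:M by move/toM_meq: hc; rewrite toM_scal toM_mid.
  have L0 : forall Z : 'M[K]_n.+1, Lap Z (toC c *: 1%:M) = 0.
    by move=> Z; rewrite /Lap scalemx1 scalar_mxC subrr mulmx0 mul0mx subrr.
  apply: toC_inj; rewrite toC0 /T toC_trace toM_mul toM_lap eA0 !L0 addr0 mulmx0.
  exact: mxtrace0.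
Qed.

End Aux.

Theorem proposition3p1 :
  forall (n m : nat),
    (2 <= n)%nat -> (1 <= m)%nat -> (m <= n - 1)%nat -> Nat.gcd m n = 1%nat ->
  forall x y : Mat,
    hermitian n x -> hermitian n y ->
    is_mexp n (mscal (twopi_i_over n) x) (umat n m) ->
    is_mexp n (mscal (twopi_i_over n) y) (vmat n) ->
  forall a Ea : Mat,
    hermitian n a -> is_mexp n a Ea ->
    im (trace n (mmul n Ea (laplacian n x y a))) = 0 /\
    0 <= re (trace n (mmul n Ea (laplacian n x y a))) /\
    (trace n (mmul n Ea (laplacian n x y a)) = C0 <->
       exists c : Cplx, meq n a (mscal c mid)).
Proof. exact Aux.final. Qed.
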